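(* Suppose $A,B\in M_N(\mathbb C)$ are simultaneously diagonalizable, with a common basis of eigenvectors $v_1,\dots,v_N$, $Av_i=\lambda_iv_i$, $Bv_i=\gamma_iv_i$, all $\lambda_i$ real and positive. Let $u=0$, $\theta=1$, $m\in\mathbb N$, $h=\tau/m$, $\mu_i=\gamma_i/\lambda_i$, let $\lambda_j=\max_i\lambda_i$ and $y_j=-\lambda_jh$. If $\mu_i\in D_{y_j}$ for every $i=1,\dots,N$, then the $\theta$-method is stable.
   Context: Let $\tau>0$ and consider $y'(t)=-Ay(t)+By(t-\tau)$. With $u=0$, $\theta=1$, the $\theta$-method with step $h=\tau/m$ is the recursion $y_{n+1}=y_n+h\big[-Ay_{n+1}+By_{n-m+1}\big]$, $n\ge0$, with arbitrary starting values $y_{-m},\dots,y_0\in\mathbb C^N$; it is called stable if $y_n\to0$ as $n\to\infty$ for every choice of starting values. For $y<0$, $D_y$ is the set of $\mu\in\mathbb C$ such that every root $\xi$ of $\xi^{m+1}-\xi^m=y\,\xi^{m+1}-y\mu\,\xi$ satisfies $|\xi|<1$. *)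

(* Defs.v *)
From mathcomp Require Import all_boot all_order all_algebra.
From mathcomp Require Import reals.
From mathcomp.real_closed Require Export complex.
Set Implicit Arguments. Unset Strict Implicit. Unset Printing Implicit Defensive.
Import Order.TTheory GRing.Theory Num.Theory.
Local Open Scope ring_scope.
Local Open Scope complex_scope.

Definition D_set (R : realType) (m : nat) (y : R) (mu : R[i]) : Prop :=
  forall xi : R[i],
    xi ^+ m.+1 - xi ^+ m = y%:C * xi ^+ m.+1 - y%:C * mu * xi ->
    `|xi| < 1.

(* The theta-method with u = 0, theta = 1, step h, delay index m:
   y_{n+1} = y_n + h [ -A y_{n+1} + B y_{n-m+1} ]   for all n >= 0,
   the sequence being indexed by integers n >= -m. *)
Definition theta1_recursion (R : realType) (N : nat) (A B : 'M[R[i]]_N)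
    (m : nat) (h : R) (Y : int -> 'cV[R[i]]_N) : Prop :=
  forall n : nat,
    Y (n%:Z + 1) = Y n%:Z + h%:C *: (- (A *m Y (n%:Z + 1)) + B *m Y (n%:Z - m%:Z + 1)).

Definition tends_to_zero (R : realType) (N : nat) (Y : nat -> 'cV[R[i]]_N) : Prop :=
  forall eps : R, 0 < eps ->
    exists n0 : nat, forall n : nat, (n0 <= n)%N -> forall i : 'I_N, `|Y n i 0| < eps%:C.

(* Stability: y_n -> 0 for every choice of starting values y_{-m},...,y_0,
   i.e. for every sequence satisfying the recursion. *)
Definition theta1_stable (R : realType) (N : nat) (A B : 'M[R[i]]_N)
    (m : nat) (h : R) : Prop :=
  forall Y : int -> 'cV[R[i]]_N, theta1_recursion A B m h Y ->
    tends_to_zero (fun n : nat => Y n%:Z).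

(* Main.v *)
Require Import Defs.
From mathcomp Require Import all_boot all_order all_algebra.
From mathcomp Require Import reals.
From mathcomp.real_closed Require Import complex.
From mathcomp Require Import lra ring zify.
Set Implicit Arguments. Unset Strict Implicit. Unset Printing Implicit Defensive.
Import Order.TTheory GRing.Theory Num.Theory.
Local Open Scope ring_scope.
Local Open Scope complex_scope.

Section Basics.
Variable R : realType.
Implicit Types (z w : R[i]).

Definition nc z : R := Num.sqrt (complex.Re z ^+ 2 + complex.Im z ^+ 2).

Lemma ncE z : `|z| = (nc z)%:C.
Proof. by rewrite normc_def. Qed.

Lemma nc_ge0 z : 0 <= nc z.
Proof. exact: sqrtr_ge0. Qed.

Lemma ncD z w : nc (z + w) <= nc z + nc w.
Proof. by rewrite -lecR rmorphD /= -!ncE ler_normD. Qed.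

Lemma ncM z w : nc (z * w) = nc z * nc w.
Proof. by apply: complexI; rewrite rmorphM /= -!ncE normrM. Qed.

Lemma ncN z : nc (- z) = nc z.
Proof. by apply: complexI; rewrite -!ncE normrN. Qed.

Lemma ncB z w : nc (z - w) <= nc z + nc w.
Proof. by rewrite -(ncN w) ncD. Qed.

Lemma nc_lt z (e : R) : (`|z| < e%:C) = (nc z < e).
Proof. by rewrite ncE ltcR. Qed.

Definition tz (u : nat -> R[i]) : Prop :=
  forall eps : R, 0 < eps -> exists n0 : nat, forall n, (n0 <= n)%N -> nc (u n) < eps.

Lemma tz_ext u v : (forall n, u n = v n) -> tz u -> tz v.
Proof. by move=> e h eps /h [n0 h0]; exists n0 => n /h0; rewrite e. Qed.

Lemma tz0 : tz (fun _ => 0).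
Proof.
move=> eps e0; exists 0%N => n _.
have -> : nc 0 = 0 by apply: complexI; rewrite -ncE normr0.
done.
Qed.

Lemma tzD u v : tz u -> tz v -> tz (fun n => u n + v n).
Proof.
move=> hu hv eps e0.
have e2 : 0 < eps / 2 by rewrite divr_gt0.
have [n1 h1] := hu _ e2; have [n2 h2] := hv _ e2.
exists (maxn n1 n2) => n hn.
have := h1 n (leq_trans (leq_maxl _ _) hn).
have := h2 n (leq_trans (leq_maxr _ _) hn).
have := ncD (u n) (v n). lra.
Qed.

Lemma tzM c u : tz u -> tz (fun n => c * u n).
Proof.
move=> hu eps e0.
have e2 : 0 < eps / (nc c + 1).
  by rewrite divr_gt0 // ltr_wpDl ?nc_ge0.
have [n1 h1] := hu _ e2.
exists n1 => n hn; rewrite ncM.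
have := h1 n hn; have := nc_ge0 c; have := nc_ge0 (u n).
move=> a b h.
have hc : 0 < nc c + 1 by lra.
have : nc c * nc (u n) <= nc c * (eps / (nc c + 1)).
  by rewrite ler_wpM2l // ltW.
have : nc c * (eps / (nc c + 1)) < eps.
  rewrite mulrA ltr_pdivrMr //. nra.
lra.
Qed.

Lemma tz_shift u k : tz u -> tz (fun n => u (n + k)%N).
Proof.
move=> hu eps e0; have [n0 h0] := hu _ e0; exists n0 => n hn.
by apply: h0; apply: leq_trans hn (leq_addr _ _).
Qed.

Lemma tz_sum (I : Type) (s : seq I) (P : pred I) (F : I -> nat -> R[i]) :
  (forall i, P i -> tz (F i)) -> tz (fun n => \sum_(i <- s | P i) F i n).
Proof.
move=> hF; elim: s => [|a s IH].
  by apply: tz_ext tz0 => n; rewrite big_nil.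
have : tz (fun n => (if P a then F a n else 0) + \sum_(i <- s | P i) F i n).
  apply: tzD => //; case: (P a) /idP => [pa|_]; first exact: hF.
  exact: tz0.
by apply: tz_ext => n; rewrite big_cons; case: (P a); rewrite ?add0r.
Qed.

Lemma geom_small (rho M e : R) : 0 <= rho < 1 -> 0 <= M -> 0 < e ->
  exists k0 : nat, forall k, (k0 <= k)%N -> rho ^+ k * M < e.
Proof.
move=> /andP [r0 r1] M0 e0.
pose d := 1 - rho.
have d0 : 0 < d by rewrite /d; lra.
have key : forall k : nat, rho ^+ k * (1 + k%:R * d) <= 1.
  elim=> [|k IH]; first by rewrite expr0 mul0r addr0 mulr1.
  have pk : 0 <= rho ^+ k by rewrite exprn_ge0.
  have hr : rho * (1 + d) <= 1 by rewrite /d; nra.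
  rewrite exprS -natr1.
  have : rho ^+ k * (1 + k%:R * d) * (rho * (1 + d)) <= 1.
    have : 0 <= rho ^+ k * (1 + k%:R * d).
      by rewrite mulr_ge0 // addr_ge0 // mulr_ge0 // ltW.
    nra.
  have hk : 0 <= k%:R :> R by [].
  move=> h; apply: le_trans h.
  have : 0 <= rho * rho ^+ k by rewrite mulr_ge0.
  have : 0 <= d * d by rewrite mulr_ge0 // ltW.
  have : 0 <= k%:R * (d * d) * (rho * rho ^+ k) :> R.
    by rewrite !mulr_ge0 // ltW.
  nra.
pose x := M / (d * e).
have x0 : 0 <= x by rewrite /x divr_ge0 // mulr_ge0 // ltW.
exists (Num.Def.archi_bound x) => k hk.
have hx : x < k%:R.
  apply: lt_le_trans (archi_boundP x0) _; by rewrite ler_nat.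
have pk : 0 <= rho ^+ k by rewrite exprn_ge0.
have Mlt : M < k%:R * d * e.
  move: hx; rewrite /x ltr_pdivrMr ?mulr_gt0 //; lra.
have := key k.
have hk0 : 0 <= k%:R :> R by [].
move=> kk.
have [pz|pp] := eqVneq (rho ^+ k) 0; first by rewrite pz mul0r.
have pk' : 0 < rho ^+ k by rewrite lt_def pp pk.
have : rho ^+ k * M < rho ^+ k * (k%:R * d * e) by rewrite ltr_pM2l.
nra.
Qed.

Lemma tz_first_order (u : nat -> R[i]) r :
  nc r < 1 -> tz (fun n => u n.+1 - r * u n) -> tz u.
Proof.
move=> hr hw eps e0.
set rho := nc r.
have r0 : 0 <= rho := nc_ge0 r.
have e1 : 0 < eps * (1 - rho) / 2 by rewrite divr_gt0 // mulr_gt0 // subr_gt0.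
have [N hN] := hw _ e1.
have bnd : forall k, nc (u (N + k)%N) <= rho ^+ k * nc (u N) + eps / 2.
  elim=> [|k IH]; first by rewrite addn0 expr0 mul1r; have := e0; lra.
  have h1 := hN (N + k)%N (leq_addr _ _).
  have eq1 : u (N + k.+1)%N = (u (N + k).+1 - r * u (N + k)%N) + r * u (N + k)%N.
    by rewrite addnS subrK.
  rewrite eq1.
  apply: le_trans (ncD _ _) _.
  rewrite ncM -/rho exprS.
  have : rho * nc (u (N + k)%N) <= rho * (rho ^+ k * nc (u N) + eps / 2).
    by rewrite ler_wpM2l.
  nra.
have e2 : 0 < eps / 2 by rewrite divr_gt0.
have [k0 hk0] := geom_small (M := nc (u N)) (e := eps / 2) (rho := rho)
   (ltac:(by rewrite r0 hr)) (nc_ge0 _) e2.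
exists (N + k0)%N => n hn.
have -> : n = (N + (n - N))%N by rewrite subnKC // (leq_trans (leq_addr _ _) hn).
apply: le_lt_trans (bnd _) _.
have := hk0 (n - N)%N (ltac:(by rewrite leq_subRL ?(leq_trans (leq_addr _ _) hn))).
lra.
Qed.


Definition ev (d : nat) (p : {poly R[i]}) (t : nat -> R[i]) (n : nat) : R[i] :=
  \sum_(k < d) p`_k * t (n + k)%N.

Lemma ev_widen d (p : {poly R[i]}) t n : (size p <= d)%N -> ev d p t n = ev (size p) p t n.
Proof.
move=> hd; rewrite /ev.
rewrite (big_ord_widen d (fun k => p`_k * t (n + k)%N) hd).
rewrite [RHS]big_mkcond /=; apply: eq_bigr => k _.
by case: ifP => // /negbT; rewrite -leqNgt => hk; rewrite nth_default ?mul0r.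
Qed.

Lemma evZ d c p t n : ev d (c *: p) t n = c * ev d p t n.
Proof. by rewrite /ev mulr_sumr; apply: eq_bigr => k _; rewrite coefZ mulrA. Qed.

Fixpoint opl (rs : seq R[i]) (t : nat -> R[i]) : nat -> R[i] :=
  match rs with
  | [::] => t
  | r :: rs' => fun n => opl rs' t n.+1 - r * opl rs' t n
  end.

Lemma ev_prod rs t n :
  ev (size rs).+1 (\prod_(z <- rs) ('X - z%:P)) t n = opl rs t n.
Proof.
elim: rs n => [|r rs IH] n /=.
  by rewrite big_nil /ev big_ord1 addn0 coefC mul1r.
rewrite -!IH big_cons mulrBl /ev.
set P := \prod_(z <- rs) ('X - z%:P).
have sP : size P = (size rs).+1 by rewrite size_prod_XsubC.
rewrite (eq_bigr (fun k : 'I_(size rs).+2 => ('X * P)`_k * t (n + k)%N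
    - r * (P`_k * t (n + k)%N))); last first.
  by move=> k _; rewrite coefB coefCM mulrBl mulrA.
rewrite sumrB -mulr_sumr; congr (_ - _ * _).
  rewrite big_ord_recl /= coefXM /= mul0r add0r.
  by apply: eq_bigr => k _; rewrite coefXM /= addnS.
rewrite big_ord_recr /= [P`_ _]nth_default ?sP // mul0r addr0.
done.
Qed.

Lemma tz_opl rs t : (forall z, z \in rs -> nc z < 1) -> tz (opl rs t) -> tz t.
Proof.
elim: rs => [|r rs IH] //= hz h.
apply: IH; first by move=> z zi; apply: hz; rewrite inE zi orbT.
apply: (tz_first_order (r := r)) => //.
by apply: hz; rewrite inE eqxx.
Qed.

Lemma rec_zero d (p : {poly R[i]}) (t : nat -> R[i]) :
  p != 0 -> (size p <= d)%N ->
  (forall z, root p z -> nc z < 1) ->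
  (forall n, ev d p t n = 0) -> tz t.
Proof.
move=> p0 hd hr he.
have [rs hrs] := closed_field_poly_normal p.
set P := \prod_(z <- rs) ('X - z%:P) in hrs.
have lc0 : lead_coef p != 0 by rewrite lead_coef_eq0.
have sP : size P = size p by rewrite hrs size_scale.
apply: (@tz_opl rs).
  move=> z zi; apply: hr; rewrite hrs rootZ // root_prod_XsubC //.
apply: tz_ext tz0 => n.
rewrite -ev_prod -(size_prod_XsubC rs id) -/P.
rewrite sP; have := he n; rewrite ev_widen // {2}hrs evZ.
by move/eqP; rewrite mulf_eq0 (negbTE lc0) /= => /eqP ->.
Qed.


Notation ReC := (@complex.Re R).
Notation ImC := (@complex.Im R).

Lemma ReD (u v : R[i]) : ReC (u + v) = ReC u + ReC v.
Proof. by case: u v => [a b] [c d]. Qed.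
Lemma ReB (u v : R[i]) : ReC (u - v) = ReC u - ReC v.
Proof. by case: u v => [a b] [c d]. Qed.
Lemma ImB (u v : R[i]) : ImC (u - v) = ImC u - ImC v.
Proof. by case: u v => [a b] [c d]. Qed.
Lemma ReM (u v : R[i]) : ReC (u * v) = ReC u * ReC v - ImC u * ImC v.
Proof. by case: u v => [a b] [c d]. Qed.
Lemma ImM (u v : R[i]) : ImC (u * v) = ReC u * ImC v + ImC u * ReC v.
Proof. by case: u v => [a b] [c d]. Qed.
Lemma ReV (v : R[i]) : ReC (v^-1) = ReC v / (ReC v ^+ 2 + ImC v ^+ 2).
Proof. by case: v => [c d]. Qed.
Lemma ImV (v : R[i]) : ImC (v^-1) = - ImC v / (ReC v ^+ 2 + ImC v ^+ 2).
Proof. case: v => [c d] /=. by rewrite mulNr. Qed.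
Lemma ReR (k : R) : ReC k%:C = k. Proof. by []. Qed.
Lemma ImR (k : R) : ImC k%:C = 0. Proof. by []. Qed.
Lemma ReRM (k : R) (w : R[i]) : ReC (k%:C * w) = k * ReC w.
Proof. by rewrite ReM ReR ImR mul0r subr0. Qed.

Lemma ReDiv (u v : R[i]) : v != 0 ->
  ReC (u / v) = (ReC u * ReC v + ImC u * ImC v) / (ReC v ^+ 2 + ImC v ^+ 2).
Proof.
move=> v0; rewrite ReM ReV ImV.
by rewrite mulNr mulrN opprK !mulrA -mulrDl.
Qed.

Lemma ncsq z : nc z ^+ 2 = ReC z ^+ 2 + ImC z ^+ 2.
Proof. by rewrite /nc sqr_sqrtr // addr_ge0 // sqr_ge0. Qed.

Lemma nc_eq0 z : nc z = 0 -> z = 0.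
Proof. by move=> h; apply/eqP; rewrite -normr_eq0 ncE h. Qed.

Lemma Re_term (x z : R[i]) : 1 <= nc x -> nc z < 1 -> 0 < ReC (x / (x - z)).
Proof.
move=> hx hz.
have hxz : x - z != 0.
  apply/eqP => /eqP; rewrite subr_eq0 => /eqP e; move: hz; rewrite -e; lra.
rewrite ReDiv // ReB ImB.
have := ncsq x; have := ncsq z; have := nc_ge0 z; have := nc_ge0 x.
case: x hx hxz => [x1 x2]; case: z hz => [z1 z2] /= hz hx hxz h1 h2 h3 h4.
have D0 : 0 < (x1 - z1) ^+ 2 + (x2 - z2) ^+ 2.
  rewrite lt_def addr_ge0 ?sqr_ge0 // andbT.
  apply/eqP => e.
  have s1 := sqr_ge0 (x1 - z1); have s2 := sqr_ge0 (x2 - z2).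
  have e1 : (x1 - z1) ^+ 2 = 0 by apply/eqP; rewrite eq_le sqr_ge0 andbT; lra.
  have e2 : (x2 - z2) ^+ 2 = 0 by apply/eqP; rewrite eq_le sqr_ge0 andbT; lra.
  move: hxz; move/eqP: e1; move/eqP: e2; rewrite !sqrf_eq0 !subr_eq0 => /eqP -> /eqP ->.
  by rewrite eqxx.
apply: divr_gt0 => //.
nra.
Qed.

Lemma Re_sum (x : R[i]) (rs : seq R[i]) :
  ReC (\sum_(z <- rs) x / (x - z)) = \sum_(z <- rs) ReC (x / (x - z)).
Proof.
elim: rs => [|r rs IH]; first by rewrite !big_nil.
by rewrite !big_cons ReD IH.
Qed.

Lemma Re_sum_pos (x : R[i]) (rs : seq R[i]) : rs != [::] ->
  1 <= nc x -> (forall z, z \in rs -> nc z < 1) ->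
  0 < ReC (\sum_(z <- rs) x / (x - z)).
Proof.
case: rs => [//|r rs] _ hx hz; rewrite Re_sum big_cons.
apply: ltr_pwDl; first by apply: Re_term => //; apply: hz; rewrite inE eqxx.
rewrite big_seq; apply: sumr_ge0 => z zi; apply: ltW; apply: Re_term => //.
by apply: hz; rewrite inE zi orbT.
Qed.

Lemma logderiv (rs : seq R[i]) (x : R[i]) :
  (\prod_(z <- rs) ('X - z%:P)).[x] != 0 ->
  x * (\prod_(z <- rs) ('X - z%:P))^`().[x] =
  (\prod_(z <- rs) ('X - z%:P)).[x] * \sum_(z <- rs) x / (x - z).
Proof.
elim: rs => [|r rs IH].
  by rewrite !big_nil derivC horner0 mulr0 mulr0.
rewrite !big_cons derivM hornerD !hornerM derivXsubC hornerXsubC hornerC mul1r.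
set P := \prod_(z <- rs) ('X - z%:P) => h.
have hr : x - r != 0 by move: h; rewrite mulf_eq0 negb_or => /andP [].
have hP : P.[x] != 0 by move: h; rewrite mulf_eq0 negb_or => /andP [].
have := IH hP.
set S := \sum_(z <- rs) x / (x - z).
set dP := P^`().[x] => e.
have eS : S = x * dP / P.[x] by rewrite e mulrC mulKf.
rewrite eS. field.
by rewrite hr hP.
Qed.


Definition Qp (a : R) (mu : R[i]) (n : nat) : {poly R[i]} :=
  (1 + a)%:C *: 'X^(n.+1) - ('X^n) - (a%:C * mu)%:P.

Lemma Qp_horner a mu n x :
  (Qp a mu n).[x] = (1 + a)%:C * x ^+ n.+1 - x ^+ n - a%:C * mu.
Proof. by rewrite /Qp !hornerE. Qed.

Lemma Qp_coef_top a mu n : (Qp a mu n)`_n.+1 = (1 + a)%:C.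
Proof.
rewrite /Qp coefB coefB coefZ coefXn coefXn coefC eqxx mulr1.
by rewrite (gtn_eqF (ltnSn n)) /= subr0 subr0.
Qed.

Lemma Qp_size a mu n : (size (Qp a mu n) <= n.+2)%N.
Proof.
apply/leq_sizeP => j hj.
rewrite /Qp coefB coefB coefZ coefXn coefXn coefC.
have -> : (j == n.+1) = false by apply/negbTE; rewrite neq_ltn hj orbT.
have -> : (j == n) = false by apply/negbTE; rewrite neq_ltn (ltn_trans _ hj) ?orbT.
have -> : (j == 0%N) = false by apply/negbTE; rewrite -lt0n (leq_trans _ hj).
by rewrite mulr0 subr0 subr0.
Qed.

Lemma Qp_size_gt a mu n : 0 < a -> (n.+1 < size (Qp a mu n))%N.
Proof.
move=> a0; rewrite ltnNge; apply/negP => /leq_sizeP /(_ n.+1 (leqnn _)).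
rewrite Qp_coef_top => /complexI; lra.
Qed.

Lemma Qp_deriv_horner a mu n x :
  x * (Qp a mu n)^`().[x] = x ^+ n * (((1 + a) * n.+1%:R)%:C * x - (n%:R)%:C).
Proof.
rewrite /Qp !derivE !hornerE /=.
rewrite rmorphM /= !rmorph_nat.
rewrite !hornerMn !hornerXn.
set c := (1 + a)%:C.
case: n => [|n] /=; first by rewrite mulr0n mulr1n !expr0 !subr0 !mulr1 mul1r mulrC.
rewrite -(mulr_natr (x ^+ n.+1)) -(mulr_natr (x ^+ n)) exprS.
have -> : (n.+2%:R : R[i]) = n.+1%:R + 1 by rewrite -natr1.
set k := (n.+1%:R : R[i]).
set y := x ^+ n. clearbody c k y. ring.
Qed.

End Basics.

Section M.
Variable R : realType.
Notation ReC := (@complex.Re R).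
Notation ImC := (@complex.Im R).
Lemma mono_roots (n : nat) (a b : R) (mu : R[i]) : 0 < a -> a <= b ->
  (forall z, root (Qp b mu n) z -> nc z < 1) ->
  forall z, root (Qp a mu n) z -> nc z < 1.
Proof.
move=> a0 ab hb z hz.
rewrite ltNge; apply/negP => hz1.
have z0 : z != 0 by apply/eqP => e; move: hz1; rewrite e /nc /= expr0n /= addr0 sqrtr0; lra.
move: hz; rewrite /root Qp_horner => /eqP Ea.
have [eab|nab] := eqVneq a b.
  have := hb z; rewrite /root Qp_horner -eab Ea eqxx => /(_ isT); lra.
have ab' : a < b by rewrite lt_def eq_sym nab ab.
have Eb : (Qp b mu n).[z] = z ^+ n * (z - 1) * ((a - b) / a)%:C.
  rewrite Qp_horner.
  have amu : mu = ((1 + a)%:C * z ^+ n.+1 - z ^+ n) / a%:C.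
    have a0' : a%:C != 0 by apply/eqP => /complexI; lra.
    apply: (mulIf a0'); rewrite mulfVK //.
    move/eqP: Ea; rewrite subr_eq0 => /eqP ->; ring.
  have a0' : a%:C != 0 by apply/eqP => /complexI; lra.
  rewrite amu exprS fmorph_div /= !rmorphB /= !rmorphD /= rmorph1.
  field. done.
have z1 : z - 1 != 0.
  apply/eqP => e.
  have := hb z; rewrite /root Eb e mulr0 mul0r eqxx => /(_ isT).
  have -> : z = 1 by apply/eqP; rewrite -subr_eq0 e.
  have -> : nc (1 : R[i]) = 1 by apply: complexI; rewrite -ncE normr1.
  lra.
have kab : ((a - b) / a)%:C != 0.
  apply/eqP => /complexI /eqP; rewrite mulf_eq0 invr_eq0 subr_eq0; lra.
have Qb0 : (Qp b mu n).[z] != 0.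
  by rewrite Eb !mulf_neq0 // expf_neq0.
have [rs hrs] := closed_field_poly_normal (Qp b mu n).
set P := \prod_(w <- rs) ('X - w%:P) in hrs.
set lc := lead_coef (Qp b mu n) in hrs.
have PQ : (Qp b mu n).[z] = lc * P.[z] by rewrite {1}hrs hornerZ.
have dPQ : (Qp b mu n)^`().[z] = lc * P^`().[z] by rewrite {1}hrs derivZ hornerZ.
have P0 : P.[z] != 0 by move: Qb0; rewrite PQ mulf_eq0 negb_or => /andP [].
have hl := logderiv P0.
set S := \sum_(w <- rs) z / (z - w) in hl.
have key : z * (Qp b mu n)^`().[z] = (Qp b mu n).[z] * S.
  by rewrite dPQ PQ mulrCA hl mulrA.
rewrite Qp_deriv_horner Eb in key.
set Nn := (((1 + b) * n.+1%:R)%:C * z - (n%:R)%:C) in key.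
have eS : S = (a / (a - b))%:C * (Nn / (z - 1)).
  have zn : z ^+ n != 0 by rewrite expf_neq0.
  have ka : (a / (a - b))%:C * ((a - b) / a)%:C = 1.
    have an : a != 0 by apply/eqP; lra.
    have abn : a - b != 0 by rewrite subr_eq0; apply/eqP; lra.
    have e1 : a / (a - b) * ((a - b) / a) = 1 by rewrite mulrC mulrA divfK ?divff.
    by rewrite -rmorphM /= e1 rmorph1.
  move: ka key; set L := (a / (a - b))%:C; set K := ((a - b) / a)%:C => ka key.
  have key' : Nn = (z - 1) * K * S.
    by apply: (mulfI zn); rewrite key !mulrA.
  rewrite key' -[X in X = _]mul1r -{1}ka.
  clearbody L K. field. by rewrite z1.
have rsn : rs != [::].
  apply/eqP => e.
  have := Qp_size_gt mu n a0.
  have := Qp_size_gt mu n (lt_le_trans a0 ab).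
  rewrite hrs size_scale; last by rewrite lead_coef_eq0; apply: gt_size_poly_neq0 (Qp_size_gt mu n (lt_le_trans a0 ab)).
  by rewrite /P e big_nil size_poly1.
have Spos : 0 < ReC S.
  apply: Re_sum_pos => // w wi.
  apply: hb; rewrite hrs rootZ ?root_prod_XsubC //.
  by rewrite lead_coef_eq0; apply: gt_size_poly_neq0 (Qp_size_gt mu n (lt_le_trans a0 ab)).
have ImRM : forall (k : R) (w : R[i]), ImC (k%:C * w) = k * ImC w.
  by move=> k [w1 w2] /=; rewrite mul0r addr0.
have z10 : z - 1 != 0 := z1.
move: Spos; rewrite eS ReRM ReDiv // /Nn ReB ImB ReRM ImRM ReR ImR ReB ImB.
have := ncsq z; have := nc_ge0 z.
move: hz1; set r := nc z; set x := ReC z; set y := ImC z.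
rewrite /= !subr0 => hr1 hr0 hsq.
set A := (1 + b) * n.+1%:R; set B := n%:R : R.
set D := (x - 1) ^+ 2 + y ^+ 2.
have AB : B <= A.
  rewrite /A /B; have : (n%:R : R) <= n.+1%:R by rewrite ler_nat.
  have : 0 <= (n%:R : R) by []. nra.
have B0 : 0 <= B by [].
have D0 : 0 <= D by rewrite /D addr_ge0 ?sqr_ge0.
have num : 0 <= (A * x - B) * (x - 1) + A * y * y.
  have xr : x <= r.
    have : x ^+ 2 <= r ^+ 2 by rewrite hsq lerDl sqr_ge0.
    nra.
  have A0 : 0 <= A by lra.
  have h1 : 0 <= (A + B) * (r - x) by rewrite mulr_ge0 //; lra.
  have h2 : 0 <= (r - 1) * (A * r - B).
    rewrite mulr_ge0 //; first lra.
    have : A * 1 <= A * r by rewrite ler_wpM2l.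
    lra.
  have h3 : A * r ^+ 2 = A * (x ^+ 2 + y ^+ 2) by rewrite hsq.
  nra.
have kneg : a / (a - b) < 0.
  rewrite pmulr_rlt0 // invr_lt0; lra.
have : 0 <= ((A * x - B) * (x - 1) + A * y * y) / D by rewrite divr_ge0.
nra.
Qed.

End M.

Section Main.
Variable R : realType.

Lemma eig_row (N : nat) (V A : 'M[R[i]]_N) (d : 'I_N -> R[i]) :
  V \in unitmx -> (forall i, A *m col i V = d i *: col i V) ->
  forall (X : 'cV_N) i, (invmx V *m (A *m X)) i 0 = d i * (invmx V *m X) i 0.
Proof.
move=> Vu hA X i.
have AV : A *m V = V *m diag_mx (\row_i d i).
  apply/matrixP => k l; have e := congr1 (fun M : 'cV_N => M k 0) (hA l).
  move: e; rewrite /= mul_mx_diag !mxE => e.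
  rewrite mulrC -e; apply: eq_bigr => q _; rewrite !mxE //.
have WA : invmx V *m A = diag_mx (\row_i d i) *m invmx V.
  by rewrite -[LHS](mulmxK Vu) -(mulmxA (invmx V) A V) AV mulKmx.
by rewrite mulmxA WA -mulmxA mul_diag_mx !mxE.
Qed.

Lemma sum_delta (d j : nat) (f : nat -> R[i]) : (j < d)%N ->
  \sum_(l < d) ((l : nat) == j)%:R * f l = f j.
Proof.
move=> hj; rewrite (bigD1 (Ordinal hj)) //= eqxx mul1r big1 ?addr0 //.
move=> l hl; have -> : ((l : nat) == j) = false.
  by apply/negbTE; apply: contra hl => /eqP e; apply/eqP; apply: val_inj.
by rewrite mul0r.
Qed.

Lemma evB d (p q : {poly R[i]}) t k : ev d (p - q) t k = ev d p t k - ev d q t k.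
Proof. by rewrite /ev -sumrB; apply: eq_bigr => l _; rewrite coefB mulrBl. Qed.

Lemma evXn d j (t : nat -> R[i]) k : (j < d)%N -> ev d 'X^j t k = t (k + j)%N.
Proof.
move=> hj; rewrite /ev (eq_bigr (fun l : 'I_d => ((l : nat) == j)%:R * t (k + l)%N)).
  by rewrite (sum_delta (fun l => t (k + l)%N)).
by move=> l _; rewrite coefXn.
Qed.

Lemma evC d (c : R[i]) t k : (0 < d)%N -> ev d c%:P t k = c * t k.
Proof.
move=> hd; rewrite /ev (eq_bigr (fun l : 'I_d => ((l : nat) == 0%N)%:R * (c * t (k + l)%N))).
  by rewrite (sum_delta (fun l => c * t (k + l)%N)) // addn0.
by move=> l _; rewrite coefC; case: (_ == _); rewrite ?mul1r ?mul0r.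
Qed.

Lemma ev_Qp (a : R) mu n t k :
  ev n.+2 (Qp a mu n) t k = (1 + a)%:C * t (k + n.+1)%N - t (k + n)%N - a%:C * mu * t k.
Proof.
rewrite /Qp !evB evZ !evXn // evC //.
Qed.

End Main.

Lemma tz_unif (R : realType) (I : eqType) (s : seq I) (f : I -> nat -> R[i]) (eps : R) :
  0 < eps -> (forall i, i \in s -> tz (f i)) ->
  exists n0 : nat, forall n, (n0 <= n)%N -> forall i, i \in s -> nc (f i n) < eps.
Proof.
move=> e0; elim: s => [|a s IH] h; first by exists 0%N.
have [n1 h1] : exists n0 : nat, forall n, (n0 <= n)%N -> forall i, i \in s -> nc (f i n) < eps.
  by apply: IH => i hi; apply: h; rewrite inE hi orbT.
have [n2 h2] := h a (mem_head _ _) _ e0.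
exists (maxn n1 n2) => n hn i; rewrite inE => /orP [/eqP ->|hi].
  by apply: h2; apply: leq_trans hn; apply: leq_maxr.
by apply: h1 => //; apply: leq_trans hn; apply: leq_maxl.
Qed.

Unset Implicit Arguments.
Theorem mainTheorem12 (R : realType) (N : nat) (A B V : 'M[R[i]]_N)
    (lam : 'I_N -> R) (gam : 'I_N -> R[i]) (tau : R) (m : nat) (j : 'I_N) :
  V \in unitmx ->
  (forall i : 'I_N, A *m col i V = (lam i)%:C *: col i V) ->
  (forall i : 'I_N, B *m col i V = gam i *: col i V) ->
  (forall i : 'I_N, 0 < lam i) ->
  0 < tau -> (0 < m)%N ->
  (forall i : 'I_N, lam i <= lam j) ->
  (forall i : 'I_N, D_set m (- (lam j * (tau / m%:R))) (gam i / (lam i)%:C)) ->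
  theta1_stable A B m (tau / m%:R).
Proof.
move=> Vu hA hB hlam htau hm hmax hD.
case: m hm hD => [//|n] _ hD Y hY.
set h := tau / n.+1%:R in hD hY *.
have h0 : 0 < h by rewrite /h divr_gt0 // ltr0n.
set W := invmx V.
pose zz (i : 'I_N) (w : int) := (W *m Y w) i 0.
pose t (i : 'I_N) (k : nat) := zz i (k%:Z + 1 - n.+1%:Z).
have rec : forall i (k : nat), zz i (k%:Z + 1) =
    zz i k%:Z + h%:C * (- ((lam i)%:C * zz i (k%:Z + 1)) + gam i * zz i (k%:Z - n.+1%:Z + 1)).
  move=> i k.
  have key : forall (P0 P1 P2 P3 : 'cV[R[i]]_N), P0 = P1 + h%:C *: (- P2 + P3) ->
      P0 i 0 = P1 i 0 + h%:C * (- P2 i 0 + P3 i 0).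
    by move=> P0 P1 P2 P3 ->; rewrite !mxE.
  have e : W *m Y (k%:Z + 1) = W *m Y k%:Z + h%:C *: (- (W *m (A *m Y (k%:Z + 1)))
      + W *m (B *m Y (k%:Z - n.+1%:Z + 1))).
    by rewrite {1}(hY k) mulmxDr -scalemxAr mulmxDr mulmxN.
  have E := key _ _ _ _ e; rewrite /zz {1}E.
  by rewrite /W !(eig_row Vu hA) !(eig_row Vu hB).
have tzt : forall i, tz (t i).
  move=> i.
  set a := lam i * h; set mu := gam i / (lam i)%:C; set b := lam j * h.
  have a0 : 0 < a by rewrite /a mulr_gt0.
  have ab : a <= b by rewrite /a /b ler_pM2r.
  apply: (@rec_zero _ n.+2 (Qp a mu n)).
  - exact: gt_size_poly_neq0 (Qp_size_gt mu n a0).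
  - exact: Qp_size.
  - apply: (mono_roots (b := b)) => // z.
    rewrite /root Qp_horner => /eqP E.
    rewrite -nc_lt; apply: (hD i).
    move: E; rewrite rmorphD rmorph1 /= => E.
    rewrite -/b rmorphN /=.
    apply/eqP; rewrite -subr_eq0; apply/eqP.
    rewrite -[RHS](mul0r z) -E !exprS.
    set zn := z ^+ n; set bc := b%:C. rewrite -/mu. clearbody zn bc mu. ring.
  - move=> k; rewrite ev_Qp.
    have e1 : t i (k + n.+1)%N = zz i (k%:Z + 1).
      by rewrite /t; congr (zz i _); lia.
    have e2 : t i (k + n)%N = zz i k%:Z.
      by rewrite /t; congr (zz i _); lia.
    have e3 : t i k = zz i (k%:Z - n.+1%:Z + 1).
      by rewrite /t; congr (zz i _); lia.
    rewrite e1 e2 e3.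
    have l0 : (lam i)%:C != 0 by apply/eqP => /complexI; have := hlam i; lra.
    have -> : a%:C * mu = h%:C * gam i by rewrite /a /mu rmorphM /=; field.
    have Rk := rec i k.
    move: Rk; set z1 := zz i (k%:Z + 1); set z0 := zz i k%:Z; set zd := zz i _ => Rk.
    have Rz0 : z0 = z1 - h%:C * (- ((lam i)%:C * z1) + gam i * zd) by rewrite {1}Rk addrK.
    rewrite Rz0 /a rmorphD rmorph1 rmorphM /=. ring.
move=> eps e0.
pose M := \sum_(i0 < N) \sum_(l < N) nc (V i0 l).
have M0 : 0 <= M by apply: sumr_ge0 => i0 _; apply: sumr_ge0 => l _; apply: nc_ge0.
have e1 : 0 < eps / (M + 1) / N.+1%:R by rewrite !divr_gt0 // ltr_pwDr.
have [n0 hn0] := tz_unif (s := enum 'I_N) (f := fun l k => t l (k + n)%N) e1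
   (fun l _ => tz_shift n (tzt l)).
exists n0 => k hk i0.
rewrite nc_lt.
have hYk : Y k%:Z = V *m (W *m Y k%:Z) by rewrite mulKVmx.
rewrite hYk mxE.
have ez : forall l, (W *m Y k%:Z) l 0 = t l (k + n)%N.
  by move=> l; rewrite /t /zz; congr ((W *m Y _) l 0); lia.
have hs : nc (\sum_l V i0 l * (W *m Y k%:Z) l 0) <= \sum_l nc (V i0 l) * (eps / (M + 1) / N.+1%:R).
  apply: le_trans (_ : _ <= \sum_l nc (V i0 l * (W *m Y k%:Z) l 0)) _.
    rewrite -lecR rmorph_sum /= -ncE.
    apply: le_trans (ler_norm_sum _ _ _) _.
    by apply: ler_sum => l _; rewrite ncE.
  apply: ler_sum => l _; rewrite ncM ez; apply: ler_wpM2l; first exact: nc_ge0.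
  by apply: ltW; apply: hn0 => //; rewrite mem_enum.
have hM : \sum_l nc (V i0 l) <= M.
  rewrite /M [X in _ <= X](bigD1 i0) //= lerDl; apply: sumr_ge0 => i1 _; apply: sumr_ge0 => l _.
  exact: nc_ge0.
apply: le_lt_trans hs _.
rewrite -mulr_suml.
set e2 := eps / (M + 1) / N.+1%:R.
have e2le : e2 <= eps / (M + 1).
  rewrite /e2 ler_pdivrMr ?ltr0n // ler_peMr ?ler1n //.
  by apply: ltW; rewrite divr_gt0 // ltr_pwDr.
have : eps / (M + 1) * M < eps.
  rewrite mulrAC ltr_pdivrMr ?ltr_pwDr //; nra.
have S0 : 0 <= \sum_l nc (V i0 l) by apply: sumr_ge0 => l _; apply: nc_ge0.
have : 0 <= e2 by apply: ltW.
nra.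
Qed.
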